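(* Let $n>1$ and $k>1$ be integers and let $t_1,\ldots,t_k$ be positive divisors of $n$. Consider the family GRDH with parameters $n,k,t_1,\ldots,t_k$. There exists $\varepsilon<1$ such that GRDH is $\varepsilon$-almost-universal if and only if $n$ is odd and $t_1=\cdots=t_k=1$ (i.e., the keys range over $(\mathbb{Z}_n^* )^k$). Moreover, if $n$ is odd and $t_1=\cdots=t_k=1$, then GRDH is $\frac{1}{p-1}$-almost-universal, where $p$ is the smallest prime divisor of $n$, and this bound is tight: there exist distinct $\mathbf{m},\mathbf{m}'\in\mathbb{Z}_n^k$ with $\Pr_{\mathbf{x}}[\Upsilon_{\mathbf{x}}(\mathbf{m})=\Upsilon_{\mathbf{x}}(\mathbf{m}')]=\frac{1}{p-1}$.
   Context: Let $n>1$, $k\ge1$ be integers and $t_1,\ldots,t_k$ positive divisors of $n$. The family GRDH consists of the functions $\Upsilon_{\mathbf{x}}:\mathbb{Z}_n^k\to\mathbb{Z}_n$, $\Upsilon_{\mathbf{x}}(\mathbf{m})=\sum_{i=1}^k m_ix_i \bmod n$, indexed by keys $\mathbf{x}=\langle x_1,\ldots,x_k\rangle\in\mathbb{Z}_n^k$ satisfying $\gcd(x_i,n)=t_i$ for $1\le i\le k$. When $t_1=\cdots=t_k=1$ (keys in $(\mathbb{Z}_n^* )^k$) the family is called RDH. All probabilities are over a key $\mathbf{x}$ chosen uniformly at random from the set of admissible keys. The family is $\varepsilon$-almost-universal if for all distinct $\mathbf{m},\mathbf{m}'\in\mathbb{Z}_n^k$, $\Pr_{\mathbf{x}}[\Upsilon_{\mathbf{x}}(\mathbf{m})=\Upsilon_{\mathbf{x}}(\mathbf{m}')]\le\varepsilon$.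 *)

(* Defs.v *)
From HB Require Import structures.
From mathcomp Require Import all_boot all_order all_algebra.
Set Implicit Arguments. Unset Strict Implicit. Unset Printing Implicit Defensive.
Import Order.TTheory GRing.Theory Num.Theory.

(* Elements of Z_n are represented by 'I_n = {0,..,n-1}; vectors in Z_n^k by
   finite functions 'I_k -> 'I_n.  The divisor parameters t_1..t_k are t : 'I_k -> nat. *)

Definition key_set (n k : nat) (t : 'I_k -> nat) : {set {ffun 'I_k -> 'I_n}} :=
  [set x : {ffun 'I_k -> 'I_n} | [forall i, gcdn (x i) n == t i]].

Definition Ups (n k : nat) (x m : {ffun 'I_k -> 'I_n}) : nat :=
  (\sum_(i < k) (m i : nat) * (x i : nat)) %% n.

Definition coll_prob (n k : nat) (t : 'I_k -> nat) (m m' : {ffun 'I_k -> 'I_n}) : rat :=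
  (#|[set x in @key_set n k t | @Ups n k x m == @Ups n k x m']|%:R / #|@key_set n k t|%:R)%R.

Definition almost_universal (n k : nat) (t : 'I_k -> nat) (eps : rat) : Prop :=
  forall m m' : {ffun 'I_k -> 'I_n}, m != m' -> (@coll_prob n k t m m' <= eps)%R.

(* Main.v *)
Require Import Defs.
From HB Require Import structures.
From mathcomp Require Import all_boot all_order all_algebra.
From mathcomp Require Import zify.
Import Order.TTheory GRing.Theory Num.Theory.
Set Implicit Arguments. Unset Strict Implicit.


Lemma mod_cancel c d a b : coprime c d -> c * a = c * b %[mod d] -> a = b %[mod d].
Proof.
move=> cop.
wlog le_ab : a b / a <= b.
  move=> H; case/orP: (leq_total a b) => h E; first exact: H.
  by apply/esym/H.
move=> E; apply/eqP; rewrite eq_sym eqn_mod_dvd //.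
move/eqP: E; rewrite eq_sym eqn_mod_dvd ?leq_mul2l ?le_ab ?orbT //.
by rewrite -mulnBr Gauss_dvdr // coprime_sym.
Qed.

Lemma unit_lift n q r : 0 < n -> prime q -> q %| n -> coprime r q ->
  {u | coprime u n & u = r %[mod q]}.
Proof.
move=> n0 pq qn crq.
have [m cqm En] := pfactor_coprime pq n0.
exists (chinese q m r 1); last exact: chinese_modl.
rewrite En coprimeMr; apply/andP; split.
  by rewrite -coprime_modl chinese_modr // coprime_modl coprime1n.
by apply: coprimeXr; rewrite -coprime_modl chinese_modl // coprime_modl.
Qed.

Lemma gcd_div_coprime c n : 0 < n -> coprime (c %/ gcdn c n) (n %/ gcdn c n).
Proof.
move=> n0; set g := gcdn c n.
have g0 : 0 < g by rewrite gcdn_gt0 n0 orbT.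
have Hc : c = g * (c %/ g) by rewrite mulnC divnK // dvdn_gcdl.
have Hn : n = g * (n %/ g) by rewrite mulnC divnK // dvdn_gcdr.
rewrite /coprime -(eqn_pmul2l g0) muln_gcdr -Hc -Hn muln1.
by [].
Qed.

Lemma L2 n c x y : 0 < n -> c * x = c * y %[mod n] -> x = y %[mod n %/ gcdn c n].
Proof.
move=> n0.
wlog le_xy : x y / x <= y.
  move=> H; case/orP: (leq_total x y) => h E; first exact: H.
  by apply/esym/H.
set g := gcdn c n.
have g0 : 0 < g by rewrite gcdn_gt0 n0 orbT.
have Hc : c = g * (c %/ g) by rewrite mulnC divnK // dvdn_gcdl.
have Hn : n = g * (n %/ g) by rewrite mulnC divnK // dvdn_gcdr.
move=> E; apply/eqP; rewrite eq_sym eqn_mod_dvd //.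
move/eqP: E; rewrite eq_sym eqn_mod_dvd ?leq_mul2l ?le_xy ?orbT //.
rewrite -mulnBr {1}Hn {1}Hc -mulnA dvdn_pmul2l // Gauss_dvdr //.
by rewrite coprime_sym gcd_div_coprime.
Qed.

Lemma L2b n c : 0 < n -> ~~ (n %| c) -> 1 < n %/ gcdn c n.
Proof.
move=> n0 ndc; set g := gcdn c n.
have g0 : 0 < g by rewrite gcdn_gt0 n0 orbT.
have Hn : n = (n %/ g) * g by rewrite divnK // dvdn_gcdr.
case E: (n %/ g) => [|[|//]].
  by move: Hn; rewrite E mul0n => h; rewrite h in n0.
move: Hn; rewrite E mul1n => h; move: ndc; rewrite h.
by rewrite dvdn_gcdl.
Qed.

Lemma L3 n a b x y : 0 < n -> a < n -> b < n -> a != b ->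
  a * x + b * y = b * x + a * y %[mod n] ->
  x = y %[mod n %/ gcdn (if b < a then a - b else b - a) n].
Proof.
move=> n0 an bn nab.
wlog lt_ba : a b x y an bn nab / b < a.
  move=> H; case: (ltngtP b a) => h E.
  - by have := H a b x y an bn nab h E; rewrite h.
  - apply/esym.
    have := H b a y x bn an _ h; rewrite h; apply; first by rewrite eq_sym.
    by rewrite addnC E addnC.
  - by move: nab; rewrite h eqxx.
rewrite lt_ba => E; apply: L2 => //.
have Ha : a = (a - b) + b by rewrite subnK // ltnW.
have e1 : (a - b) * x + (b * x + b * y) = a * x + b * y.
  rewrite {2}Ha mulnDl; lia.
have e2 : (a - b) * y + (b * x + b * y) = b * x + a * y.
  rewrite {2}Ha mulnDl; lia.
by apply/eqP; rewrite -(eqn_modDr (b * x + b * y)) e1 e2; apply/eqP.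
Qed.


Lemma inK N k (t : 'I_k -> nat) (x : {ffun 'I_k -> 'I_N}) : (forall i, t i = 1) ->
  (x \in @key_set N k t) = [forall j, coprime (x j) N].
Proof. by move=> Ht; rewrite inE; apply: eq_forallb => j; rewrite Ht. Qed.

Lemma L1 N k (t : 'I_k -> nat) q (i : 'I_k) (C : {set {ffun 'I_k -> 'I_N}}) :
  (forall i, t i = 1) -> 0 < N -> prime q -> q %| N -> C \subset @key_set N k t ->
  (forall x y, x \in C -> y \in C -> (forall j, j != i -> x j = y j) ->
     (x i : nat) = y i %[mod q]) ->
  #|C| * q.-1 <= #|@key_set N k t|.
Proof.
move=> Ht N0 pq qN CK P.
have q0 : 0 < q by exact: prime_gt0.
have hU : forall r : 'I_q.-1, {u | coprime u N & u = r.+1 %[mod q]}.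
  move=> r; apply: unit_lift => //.
  rewrite coprime_sym prime_coprime //; apply/negP => /dvdn_leq => /(_ isT).
  by have := ltn_ord r; lia.
have [U HU1 HU2] : {U : 'I_q.-1 -> nat | forall r, coprime (U r) N &
     forall r, U r = r.+1 %[mod q]}.
  by exists (fun r => s2val (hU r)) => r; case: (hU r).
pose f (z : {ffun 'I_k -> 'I_N} * 'I_q.-1) : {ffun 'I_k -> 'I_N} :=
  [ffun j => if j == i then Ordinal (ltn_pmod (z.1 i * U z.2) N0) else z.1 j].
have inj : {in setX C [set: 'I_q.-1] &, injective f}.
  move=> [x r] [y s] /setXP [xC _] /setXP [yC _] /= Hf.
  have Hj j : f (x, r) j = f (y, s) j by rewrite Hf.
  have off j : j != i -> x j = y j.
    by move=> ne; have := Hj j; rewrite /f !ffunE (negbTE ne).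
  have Hi : (x i * U r) %% N = (y i * U s) %% N.
    by have := congr1 (@nat_of_ord N) (Hj i); rewrite /f !ffunE eqxx.
  have Hq := P x y xC yC off.
  have cx : coprime (x i) q.
    have := subsetP CK x xC; rewrite inK // => /forallP /(_ i).
    by apply: coprime_dvdr.
  have Hq2 : x i * r.+1 = x i * s.+1 %[mod q].
    rewrite -modnMmr -HU2 modnMmr -[RHS]modnMmr -HU2 modnMmr.
    rewrite -(modn_dvdm _ qN) Hi modn_dvdm //.
    by rewrite -modnMml -Hq modnMml.
  have rs : r = s.
    apply: val_inj; apply/eq_add_S.
    have := mod_cancel cx Hq2; rewrite !modn_small //.
      by have := ltn_ord s; lia.
    by have := ltn_ord r; lia.
  subst s.
  have Hx : x i = y i %[mod N].
    by apply: (@mod_cancel (U r)); rewrite ?HU1 // mulnC Hi mulnC.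
  have exy : x = y.
    apply/ffunP => j; case: (eqVneq j i) => [->|ne]; last exact: off.
    by apply: val_inj; move: Hx; rewrite !modn_small.
  by rewrite exy.
have sub : f @: setX C [set: 'I_q.-1] \subset @key_set N k t.
  apply/subsetP => _ /imsetP [[x r] /setXP [xC _] ->].
  have := subsetP CK x xC; rewrite !inK // => /forallP H.
  apply/forallP => j; rewrite /f ffunE.
  case: (j == i); last exact: H.
  rewrite [nat_of_ord _]/= coprime_modl coprimeMl.
  by apply/andP; split; [exact: H | exact: HU1].
have -> : #|C| * q.-1 = #|setX C [set: 'I_q.-1]| by rewrite cardsX cardsT card_ord.
by rewrite -(card_in_imset inj); apply: subset_leq_card.
Qed.


Lemma K0 N k (t : 'I_k -> nat) : (forall i, 0 < t i /\ t i %| N) -> 0 < N ->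
  0 < #|@key_set N k t|.
Proof.
move=> Ht N0; rewrite card_gt0; apply/set0Pn.
exists [ffun j => Ordinal (ltn_pmod (t j) N0)]; rewrite inE.
apply/forallP => j; rewrite ffunE /= gcdn_modl; apply/eqP/gcdn_idPl.
by case: (Ht j).
Qed.

Lemma UB N k (t : 'I_k -> nat) (m m' : {ffun 'I_k -> 'I_N}) :
  (forall i, t i = 1) -> 0 < N -> m != m' ->
  exists2 q, prime q & (q %| N) /\
    #|[set x in @key_set N k t | @Ups N k x m == @Ups N k x m']| * q.-1
      <= #|@key_set N k t|.
Proof.
move=> Ht N0 Hm.
have [i Hi] : exists i, m i != m' i.
  apply/existsP; move: Hm; apply: contraR; rewrite negb_exists => /forallP H.
  by apply/eqP/ffunP => j; apply/eqP; move: (H j); rewrite negbK.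
set a := (m i : nat); set b := (m' i : nat).
have nab : a != b by [].
set c := if b < a then a - b else b - a.
have aN : a < N by exact: ltn_ord.
have bN : b < N by exact: ltn_ord.
have nc : ~~ (N %| c).
  rewrite /c; case: ltnP => h; apply/negP => /dvdn_leq.
    by move=> /(_ _); lia.
  move: nab; rewrite neq_ltn => /orP [h2|h2]; last by lia.
  by move=> /(_ _); lia.
have q1 := L2b N0 nc.
set M := N %/ gcdn c N.
have qM : pdiv M %| M by exact: pdiv_dvd.
exists (pdiv M); first exact: pdiv_prime.
split; first exact: dvdn_trans qM (dvdn_div (dvdn_gcdr c N)).
apply: (@L1 _ _ _ _ i) => //; first exact: pdiv_prime.
- exact: dvdn_trans qM (dvdn_div (dvdn_gcdr c N)).
- by apply/subsetP => x; rewrite inE => /andP [].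
move=> x y; rewrite !inE => /andP [_ hx] /andP [_ hy] off.
move: hx hy; rewrite /Ups (bigD1 i) //= [X in _ == X %% N](bigD1 i) //=.
rewrite [X in _ -> X %% N == _ -> _](bigD1 i) //= [X in _ -> _ == X %% N -> _](bigD1 i) //=.
set Sx := \sum_(j < k | j != i) m j * x j.
set Tx := \sum_(j < k | j != i) m' j * x j.
set Sy := \sum_(j < k | j != i) m j * y j.
set Ty := \sum_(j < k | j != i) m' j * y j.
have -> : Sy = Sx by apply: eq_bigr => j ne; rewrite off.
have -> : Ty = Tx by apply: eq_bigr => j ne; rewrite off.
move=> /eqP hx /eqP hy.
have E : a * x i + b * y i = b * x i + a * y i %[mod N].
  apply/eqP; rewrite -(eqn_modDr (Sx + Tx)); apply/eqP.
  have e1 : a * x i + b * y i + (Sx + Tx) = (a * x i + Sx) + (b * y i + Tx) by lia.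
  have e2 : b * x i + a * y i + (Sx + Tx) = (b * x i + Tx) + (a * y i + Sx) by lia.
  by rewrite e1 e2 -modnDm hx -hy modnDm.
have := L3 N0 aN bN nab E; rewrite -/c -/M => h.
by rewrite -(modn_dvdm (x i) qM) h modn_dvdm.
Qed.

Lemma prob_le N k (t : 'I_k -> nat) (m m' : {ffun 'I_k -> 'I_N}) q :
  0 < #|@key_set N k t| -> 1 < q ->
  #|[set x in @key_set N k t | @Ups N k x m == @Ups N k x m']| * q.-1
      <= #|@key_set N k t| ->
  (@coll_prob N k t m m' <= (q.-1)%:R^-1)%R.
Proof.
move=> K0 q1 H; rewrite /coll_prob ler_pdivrMr ?ltr0n // mulrC.
rewrite ler_pdivlMr ?ltr0n; last by lia.
by rewrite -natrM ler_nat.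
Qed.

Lemma inv_le p q : 1 < p -> p <= q -> (((q.-1)%:R^-1 : rat) <= (p.-1)%:R^-1)%R.
Proof.
move=> p1 pq; rewrite lef_pV2 ?ler_nat; first lia.
- by rewrite posrE ltr0n; lia.
- by rewrite posrE ltr0n; lia.
Qed.


Lemma ord_cancel p c (r s : 'I_p) : coprime c p -> r * c = s * c %[mod p] -> r = s.
Proof.
move=> cp E; apply: val_inj; rewrite mulnC [s * c]mulnC in E.
by have := mod_cancel cp E; rewrite !modn_small.
Qed.

Lemma scale_mod d p a b : 0 < d ->
  ((d * a) %% (d * p) == (d * b) %% (d * p)) = (a %% p == b %% p).
Proof. by move=> d0; rewrite -!muln_modr eqn_pmul2l. Qed.

Lemma Tight N k (t : 'I_k -> nat) (i0 i1 : 'I_k) :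
  (forall i, t i = 1) -> 1 < N -> i0 != i1 ->
  exists m m' : {ffun 'I_k -> 'I_N},
    m != m' /\ @coll_prob N k t m m' = (((pdiv N).-1)%:R^-1)%R.
Proof.
move=> Ht N1 ne.
have N0 : 0 < N by lia.
set p := pdiv N.
have pp : prime p := pdiv_prime N1.
have pN : p %| N := pdiv_dvd N.
have p1 : 1 < p := prime_gt1 pp.
have p0 : 0 < p by lia.
set K := @key_set N k t.
have KK0 : 0 < #|K| by apply: K0 => // i; rewrite Ht.
have cK : forall x, x \in K -> forall j, coprime (x j) p.
  move=> x; rewrite inK // => /forallP H j; exact: coprime_dvdr pN (H j).
pose C (r : 'I_p) := [set x in K | (x i0 : nat) == r * x i1 %[mod p]].
pose r0 : 'I_p := Ordinal p0.
have ha : forall r, r != r0 -> #|C r| * p.-1 <= #|K|.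
  move=> r nr; apply: (@L1 _ _ _ _ i1) => //.
    by apply/subsetP => x; rewrite inE => /andP [].
  move=> x y; rewrite !inE => /andP [_ /eqP hx] /andP [_ /eqP hy] off.
  have rpos : 0 < r.
    by rewrite lt0n; apply: contra nr => /eqP h; apply/eqP/val_inj.
  have cr : coprime r p.
    rewrite coprime_sym prime_coprime //; apply/negP => /(dvdn_leq rpos).
    by rewrite leqNgt ltn_ord.
  by apply: (mod_cancel cr); rewrite -hx -hy (off i0 ne).
have hb : \sum_(r in predC1 r0) #|C r| = #|K|.
  transitivity (\sum_(r in predC1 r0) \sum_(x in K)
     (if (x i0 : nat) == r * x i1 %[mod p] then 1 else 0)).
    apply: eq_bigr => r _; rewrite -sum1_card -big_mkcondr.
    by apply: eq_bigl => x; rewrite inE.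
  rewrite exchange_big -sum1_card; apply: eq_bigr => x xK.
  pose g (r : 'I_p) : 'I_p := Ordinal (ltn_pmod (r * x i1) p0).
  have ginj : injective g.
    by move=> r s /(congr1 val) /= E; exact: ord_cancel (cK x xK i1) E.
  case: (injF_bij ginj) => h gh hg.
  set a := Ordinal (ltn_pmod (x i0) p0).
  set rx := h a.
  have Prx : (x i0 : nat) == rx * x i1 %[mod p].
    have := congr1 val (hg a); rewrite /= => e.
    by apply/eqP; rewrite e.
  have nrx : rx != r0.
    apply/eqP => E; move: Prx; rewrite E /= mul0n mod0n => h0.
    have := cK x xK i0; rewrite coprime_sym prime_coprime //.
    by rewrite /dvdn h0.
  rewrite (bigD1 rx) ?inE // Prx big1 ?addn0 // => r /andP [_ nr].
  case: ifP => // /eqP E'; exfalso; move/eqP: nr; apply.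
  apply: ord_cancel (cK x xK i1) _.
  by rewrite -E'; apply/eqP.
pose r1 : 'I_p := Ordinal p1.
have nr1 : r1 != r0 by [].
have hc : #|C r1| * p.-1 = #|K|.
  apply/eqP; rewrite eqn_leq ha //=.
  have hs : \sum_(r in predC1 r0) (#|K| - #|C r| * p.-1) == 0.
    rewrite sumnB; last by move=> r; rewrite inE; exact: ha.
    rewrite sum_nat_const cardC1 card_ord -big_distrl /= hb.
    by rewrite mulnC subnn.
  move: hs; rewrite sum_nat_eq0 => /forallP /(_ r1) /implyP /(_ nr1).
  by rewrite subn_eq0.
have dp0 : 0 < N %/ p by rewrite divn_gt0 // pdiv_leq.
pose c0 : 'I_N := Ordinal (ltn_Pdiv p1 N0).
pose z0 : 'I_N := Ordinal N0.
exists [ffun j => if j == i0 then c0 else z0], [ffun j => if j == i1 then c0 else z0].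
split.
  apply/negP => /eqP /ffunP /(_ i0); rewrite !ffunE eqxx (negbTE ne).
  by move=> /(congr1 val) /= h; rewrite h in dp0.
have eqC : [set x in K | @Ups N k x [ffun j => if j == i0 then c0 else z0]
    == @Ups N k x [ffun j => if j == i1 then c0 else z0]] = C r1.
  apply/setP => x; rewrite !inE; congr (_ && _).
  have s0 : \sum_(j < k) [ffun j => if j == i0 then c0 else z0] j * x j = (N %/ p) * x i0.
    rewrite (bigD1 i0) //= big1 ?addn0 ?ffunE ?eqxx // => j nj.
    by rewrite ffunE (negbTE nj).
  have s1 : \sum_(j < k) [ffun j => if j == i1 then c0 else z0] j * x j = (N %/ p) * x i1.
    rewrite (bigD1 i1) //= big1 ?addn0 ?ffunE ?eqxx // => j nj.
    by rewrite ffunE (negbTE nj).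
  have H := scale_mod p (x i0) (x i1) dp0; rewrite divnK // in H.
  by rewrite /Ups s0 s1 H mul1n.
have Cpos : 0 < #|C r1|.
  by move: KK0; rewrite -hc; case: #|C r1|.
rewrite /coll_prob eqC -hc natrM invfM mulrA mulfV ?mul1r //.
by rewrite pnatr_eq0 -lt0n.
Qed.

Lemma allcoll N k (t : 'I_k -> nat) (m m' : {ffun 'I_k -> 'I_N}) :
  0 < #|@key_set N k t| ->
  (forall x, x \in @key_set N k t -> @Ups N k x m == @Ups N k x m') ->
  @coll_prob N k t m m' = 1%R.
Proof.
move=> K0 H; rewrite /coll_prob.
have -> : [set x in @key_set N k t | @Ups N k x m == @Ups N k x m'] = @key_set N k t.
  apply/setP => x; rewrite inE; case: (boolP (x \in _)) => // xK.
  by rewrite (H x xK).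
by rewrite divff // pnatr_eq0 -lt0n.
Qed.


Lemma Bad1 N k (t : 'I_k -> nat) (i : 'I_k) :
  (forall i, 0 < t i /\ t i %| N) -> 1 < N -> t i != 1 ->
  exists m m' : {ffun 'I_k -> 'I_N}, m != m' /\ @coll_prob N k t m m' = 1%R.
Proof.
move=> Ht N1 ti1.
have N0 : 0 < N by lia.
have [ti0 tiN] := Ht i.
have t1 : 1 < t i by lia.
have dp0 : 0 < N %/ t i by rewrite divn_gt0 // dvdn_leq.
pose c0 : 'I_N := Ordinal (ltn_Pdiv t1 N0).
pose z0 : 'I_N := Ordinal N0.
exists [ffun j => if j == i then c0 else z0], [ffun j => z0].
split.
  apply/negP => /eqP /ffunP /(_ i); rewrite !ffunE eqxx.
  by move=> /(congr1 val) /= h; rewrite h in dp0.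
apply: allcoll; first exact: K0.
move=> x; rewrite inE => /forallP /(_ i) /eqP g.
have tx : t i %| x i by rewrite -g dvdn_gcdl.
rewrite /Ups (bigD1 i) //= big1 ?addn0 ?ffunE ?eqxx /=; last first.
  by move=> j nj; rewrite ffunE (negbTE nj).
rewrite big1 ?mod0n; last by move=> j _; rewrite ffunE.
case/dvdnP: tx => w ->.
by rewrite mulnCA divnK // modnMl.
Qed.

Lemma Bad2 N k (t : 'I_k -> nat) (i0 i1 : 'I_k) :
  (forall i, t i = 1) -> 1 < N -> ~~ odd N -> i0 != i1 ->
  exists m m' : {ffun 'I_k -> 'I_N}, m != m' /\ @coll_prob N k t m m' = 1%R.
Proof.
move=> Ht N1 ev ne.
have N0 : 0 < N by lia.
have dp0 : 0 < N %/ 2 by rewrite divn_gt0.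
have tN : 2 %| N by rewrite dvdn2.
pose c0 : 'I_N := Ordinal (ltn_Pdiv (isT : 1 < 2) N0).
pose z0 : 'I_N := Ordinal N0.
exists [ffun j => if (j == i0) || (j == i1) then c0 else z0], [ffun j => z0].
split.
  apply/negP => /eqP /ffunP /(_ i0); rewrite !ffunE eqxx.
  by move=> /(congr1 val) /= h; rewrite h in dp0.
apply: allcoll; first by apply: K0 => // i; rewrite Ht.
move=> x; rewrite inK // => /forallP cx.
have o0 : odd (x i0) by rewrite -coprimen2; apply: coprime_dvdr tN (cx i0).
have o1 : odd (x i1) by rewrite -coprimen2; apply: coprime_dvdr tN (cx i1).
rewrite /Ups (bigD1 i0) //= (bigD1 i1) //=; last by rewrite eq_sym.
rewrite big1 ?addn0 ?ffunE ?eqxx ?orbT /=; last first.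
  by move=> j /andP [n0 n1]; rewrite ffunE (negbTE n0) (negbTE n1).
rewrite big1 ?mod0n; last by move=> j _; rewrite ffunE.
have e2 : 2 %| x i0 + x i1 by rewrite dvdn2 oddD o0 o1.
case/dvdnP: e2 => w e2.
by rewrite -mulnDr e2 mulnCA divnK // modnMl.
Qed.


Unset Implicit Arguments. Set Strict Implicit.

Theorem mainTheorem2 (n k : nat) (t : 'I_k -> nat) :
  1 < n -> 1 < k -> (forall i, 0 < t i /\ t i %| n) ->
  ((exists eps : rat, (eps < 1)%R /\ @almost_universal n k t eps)
      <-> (odd n /\ forall i, t i = 1))
  /\ (odd n -> (forall i, t i = 1) ->
      @almost_universal n k t (((pdiv n).-1)%:R^-1)%R
      /\ exists m m' : {ffun 'I_k -> 'I_n},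
           m != m' /\ @coll_prob n k t m m' = (((pdiv n).-1)%:R^-1)%R).
Proof.
move=> n1 k1 Ht.
have n0 : 0 < n by lia.
have k0 : 0 < k by lia.
pose i0 : 'I_k := Ordinal k0.
pose i1 : 'I_k := Ordinal k1.
have ne : i0 != i1 by [].
have part2 : odd n -> (forall i, t i = 1) ->
      @almost_universal n k t (((pdiv n).-1)%:R^-1)%R
      /\ exists m m' : {ffun 'I_k -> 'I_n},
           m != m' /\ @coll_prob n k t m m' = (((pdiv n).-1)%:R^-1)%R.
  move=> odn allt; split; last exact: (Tight allt n1 ne).
  move=> m m' nm.
  have [q pq [qN H]] := UB allt n0 nm.
  apply: le_trans (prob_le (K0 Ht n0) (prime_gt1 pq) H) _.
  apply: inv_le; first exact: prime_gt1 (pdiv_prime n1).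
  exact: pdiv_min_dvd (prime_gt1 pq) qN.
split=> //; split.
- move=> [eps [lt1 AU]].
  have contra1 : forall m m' : {ffun 'I_k -> 'I_n},
      m != m' -> @coll_prob n k t m m' = 1%R -> False.
    move=> m m' nm e; have := AU m m' nm; rewrite e => h.
    by move: (le_lt_trans h lt1); rewrite ltxx.
  have allt : forall i, t i = 1.
    move=> i; case: (eqVneq (t i) 1) => // h.
    have [m [m' [nm e]]] := Bad1 Ht n1 h.
    by case: (contra1 m m' nm e).
  split=> //; case: (boolP (odd n)) => // ev.
  have [m [m' [nm e]]] := Bad2 allt n1 ev ne.
  by case: (contra1 m m' nm e).
- move=> [odn allt]; exists (((pdiv n).-1)%:R^-1)%R; split; last first.
    by case: (part2 odn allt).
  have pp := pdiv_prime n1.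
  have p2 : 2 < pdiv n.
    rewrite ltn_neqAle prime_gt1 // andbT; apply/eqP => h.
    by move: odn; have := pdiv_dvd n; rewrite -h dvdn2 => /negbTE ->.
  rewrite invf_lt1 ?ltr0n ?ltr1n; lia.
Qed.
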